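(* Let $A,B$ be automata, $R\subseteq\mathrm{states}(A)\times\mathrm{states}(B)$, and suppose the execution fragments $\alpha$ of $A$ and $\alpha'$ of $B$ are $R$-related via an index relation $I$. Then $\alpha'$ has a prefix $\alpha''$ (an execution fragment that is an initial segment of $\alpha'$, possibly $\alpha'$ itself) such that $\alpha$ and $\alpha''$ are $R$-related via a reduced index relation $J\subseteq I$.
   Context: An automaton $A$ consists of a set $\mathrm{states}(A)$ of states, a nonempty set $\mathrm{start}(A)\subseteq\mathrm{states}(A)$ of start states, a set $\mathrm{acts}(A)$ of actions containing a distinguished internal action $\tau$, and a set $\mathrm{steps}(A)\subseteq\mathrm{states}(A)\times\mathrm{acts}(A)\times\mathrm{states}(A)$ of steps; write $s\xrightarrow{a}_A t$ for $(s,a,t)\in\mathrm{steps}(A)$. An execution fragment of $A$ is a finite or infinite alternating sequence $s_0a_1s_1a_2s_2\cdots$ of states and actions, beginning with a state and, if finite, ending with a state, such that $s_{i-1}\xrightarrow{a_i}_A s_i$ for all $i>0$; its index set $\mathrm{Index}(\alpha)$ is the set of indices $i$ of its states $s_i$. Execution correspondence: Let $R\subseteq\mathrm{states}(A)\times\mathrm{states}(B)$ and let $\alpha=s_0a_1s_1\cdots$ and $\alpha'=u_0b_1u_1\cdots$ be execution fragments of $A$ and $B$. An index relation over $R$ between $\alpha$ and $\alpha'$ is a relation $I\subseteq\mathrm{Index}(\alpha)\times\mathrm{Index}(\alpha')$ such that (1) $(i,j)\in I$ implies $(s_i,u_j)\in R$; (2) $(i,j)\in I$, $(i',j')\in I$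 and $i<i'$ imply $j\le j'$; (3) every index of $\alpha$ is related by $I$ to some index of $\alpha'$ and every index of $\alpha'$ is related by $I$ to some index of $\alpha$; (4) if $(i,j),(i+1,j+1)\in I$ then $a_{i+1}=b_{j+1}$; if $(i,j),(i+1,j)\in I$ then $a_{i+1}=\tau$; if $(i,j),(i,j+1)\in I$ then $b_{j+1}=\tau$. The fragments $\alpha,\alpha'$ are $R$-related via $I$ if $I$ is such an index relation. An index relation $I$ between $\alpha$ and $\alpha'$ is reduced if (1) when $\alpha$ is finite, $I$ relates the final index of $\alpha$ only to the final index of $\alpha'$ (in particular $\alpha'$ is then finite); and (2) $I$ is N-free: $(i,j)\in I$ and $(i+1,j+1)\in I$ imply $(i+1,j)\notin I$ and $(i,j+1)\notin I$. *)

(* Defs.v *)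
From Stdlib Require Import Arith Lia.

(* Automata over a common action universe [Act] with a distinguished internal
   action [tau] (shared by all automata, so actions of A and B can be compared). *)
Record automaton (Act : Type) (tau : Act) := Automaton {
  state : Type;
  start : state -> Prop;
  acts : Act -> Prop;
  steps : state -> Act -> state -> Prop;
  start_nonempty : exists s, start s;
  acts_tau : acts tau;
  steps_acts : forall s a t, steps s a t -> acts a
}.
Arguments state {Act tau}.
Arguments start {Act tau}.
Arguments acts {Act tau}.
Arguments steps {Act tau}.

(* Length of a fragment: [Some n] = finite with states s_0..s_n,
   [None] = infinite. *)
Definition in_index (len : option nat) (i : nat) : Prop :=
  match len with None => True | Some n => i <= n end.

(* The sequence s_0 a_1 s_1 a_2 s_2 ... given by state sequence [s],
   action sequence [a] (a (i+1) is the action between s i and s (i+1);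
   a 0 and values past the end are irrelevant) and length [len]. *)
Definition is_frag {Act tau} (A : automaton Act tau)
  (s : nat -> state A) (a : nat -> Act) (len : option nat) : Prop :=
  forall i, in_index len (i + 1) -> steps A (s i) (a (i + 1)) (s (i + 1)).

(* The fragment with length [len''] (same sequences) is an initial segment
   (prefix) of the fragment with length [len']. *)
Definition prefix_len (len'' len' : option nat) : Prop :=
  match len'' with
  | None => len' = None
  | Some m => in_index len' m
  end.

Definition index_relation {Act tau} {A B : automaton Act tau}
  (R : state A -> state B -> Prop)
  (s : nat -> state A) (a : nat -> Act) (len : option nat)
  (u : nat -> state B) (b : nat -> Act) (len' : option nat)
  (I : nat -> nat -> Prop) : Prop :=
  (forall i j, I i j -> in_index len i /\ in_index len' j) /\
  (forall i j, I i j -> R (s i) (u j)) /\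
  (forall i j i' j', I i j -> I i' j' -> i < i' -> j <= j') /\
  (forall i, in_index len i -> exists j, I i j) /\
  (forall j, in_index len' j -> exists i, I i j) /\
  (forall i j, I i j -> I (i + 1) (j + 1) -> a (i + 1) = b (j + 1)) /\
  (forall i j, I i j -> I (i + 1) j -> a (i + 1) = tau) /\
  (forall i j, I i j -> I i (j + 1) -> b (j + 1) = tau).

Definition reduced (len len' : option nat) (I : nat -> nat -> Prop) : Prop :=
  (forall n, len = Some n -> forall j, I n j -> len' = Some j) /\
  (forall i j, I i j -> I (i + 1) (j + 1) -> ~ I (i + 1) j /\ ~ I i (j + 1)).

(* Main.v *)
Require Import Defs.
From Stdlib Require Import Arith Lia Classical.

Lemma in_index_le (L : option nat) x y : in_index L x -> y <= x -> in_index L y.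
Proof. destruct L; simpl; intros; lia. Qed.

Lemma nfree {Act tau} {A B : automaton Act tau} (R : state A -> state B -> Prop)
  s a L u b L' (I : nat -> nat -> Prop) :
  index_relation R s a L u b L' I ->
  exists J : nat -> nat -> Prop, (forall i j, J i j -> I i j) /\
    index_relation R s a L u b L' J /\
    (forall i j, J i j -> J (i+1) (j+1) -> ~ J (i+1) j /\ ~ J i (j+1)).
Proof.
  intros H. destruct H as (H1 & H2 & H3 & H4 & H5 & H6 & H7 & H8).
  set (Aa := fun i j => I i j /\ I (i+1) j /\ exists j', j = j'+1 /\ I i j').
  set (Bc := fun i j => (I i j /\ I i (j+1) /\ exists i', i = i'+1 /\ I i' j) /\
                        (forall i', i = i'+1 -> ~ Aa i' j) /\ ~ Aa i (j+1)).
  exists (fun i j => I i j /\ ~ Aa i j /\ ~ Bc i j).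
  split; [intros i j Hj; apply Hj|].
  split.
  - split; [intros i j Hj; apply H1, Hj|].
    split; [intros i j Hj; apply H2, Hj|].
    split; [intros i j i' j' Hj Hj'; apply H3; [apply Hj|apply Hj']|].
    split.
    + intros i Hi. destruct (H4 i Hi) as [j Hij].
      destruct (classic (Aa i j)) as [HA|HA].
      * destruct HA as (Hij0 & Hi1 & j' & -> & Hij'). exists j'.
        split; [exact Hij'|split].
        -- intros (_ & Hx & _). pose proof (H3 _ _ _ _ Hij0 Hx ltac:(lia)). lia.
        -- intros (_ & _ & Hn). apply Hn. split; [exact Hij0|split; [exact Hi1|]].
           exists j'; auto.
      * destruct (classic (Bc i j)) as [HB|HB].
        -- destruct HB as ((Hij0 & Hij1 & _) & Hf & Hn). exists (j+1).
           split; [exact Hij1|split; [exact Hn|]].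
           intros ((_ & _ & i' & -> & Hx) & _).
           pose proof (H3 _ _ _ _ Hx Hij0 ltac:(lia)). lia.
        -- exists j; auto.
    + split.
      * intros j Hj. destruct (H5 j Hj) as [i Hij].
        destruct (classic (Aa i j)) as [HA|HA].
        -- pose proof HA as (Hij0 & Hi1 & j' & Hjj & Hij'). exists (i+1).
           split; [exact Hi1|split].
           ++ intros (_ & _ & j'' & Hjj' & Hx).
              pose proof (H3 _ _ _ _ Hij0 Hx ltac:(lia)). lia.
           ++ intros (_ & Hf & _). apply (Hf i); auto.
        -- destruct (classic (Bc i j)) as [HB|HB].
           ++ destruct HB as ((Hij0 & Hij1 & i' & Hii & Hx) & Hf & Hn). exists i'.
              split; [exact Hx|split; [exact (Hf i' Hii)|]].
              intros ((_ & Hy & _) & _).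
              pose proof (H3 _ _ _ _ Hy Hij0 ltac:(lia)). lia.
           ++ exists i; auto.
      * split; [intros i j Hj Hj'; apply (H6 i j); [apply Hj|apply Hj']|].
        split; [intros i j Hj Hj'; apply (H7 i j); [apply Hj|apply Hj']|].
        intros i j Hj Hj'; apply (H8 i j); [apply Hj|apply Hj'].
  - intros i j (Ha & HnA & HnB) (Hb & HnA' & HnB'). split.
    + intros (Hc & HnA'' & HnB''). apply HnB''.
      split; [split; [exact Hc|split; [exact Hb|exists i; auto]]|].
      split; [|exact HnA'].
      intros i' Hi'. assert (i' = i) by lia. subst. exact HnA.
    + intros (Hc & HnA'' & HnB''). apply HnA''.
      split; [exact Hc|split; [exact Hb|exists j; auto]].
Qed.

Lemma min_ex (P : nat -> Prop) : (exists j, P j) -> exists m, P m /\ forall k, P k -> m <= k.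
Proof.
  intros [j Hj].
  assert (G : forall N j, j <= N -> P j -> exists m, P m /\ forall k, P k -> m <= k).
  { induction N as [|N IH]; intros j0 Hle Hp.
    - exists j0. split; auto. intros; lia.
    - destruct (classic (exists k, k < j0 /\ P k)) as [[k [Hk Hpk]]|Hn].
      + apply (IH k); auto; lia.
      + exists j0. split; auto. intros k Hk.
        destruct (le_lt_dec j0 k); auto. exfalso; apply Hn; eauto. }
  eapply G; eauto.
Qed.

Theorem mainTheorem11 (Act : Type) (tau : Act) (A B : automaton Act tau)
  (R : state A -> state B -> Prop)
  (s : nat -> state A) (a : nat -> Act) (len : option nat)
  (u : nat -> state B) (b : nat -> Act) (len' : option nat)
  (I : nat -> nat -> Prop) :
  is_frag A s a len -> is_frag B u b len' ->
  index_relation R s a len u b len' I ->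
  exists len'' : option nat,
    prefix_len len'' len' /\ is_frag B u b len'' /\
    exists J : nat -> nat -> Prop,
      (forall i j, J i j -> I i j) /\
      index_relation R s a len u b len'' J /\
      reduced len len'' J.
Proof.
  intros Hfa Hfb HI.
  destruct len as [n|].
  - pose proof HI as (H1 & H2 & H3 & H4 & H5 & H6 & H7 & H8).
    destruct (min_ex (I n) (H4 n ltac:(simpl; lia))) as [m [Hm Hmin]].
    assert (Hm' : in_index len' m) by apply (H1 _ _ Hm).
    set (I' := fun i j => I i j /\ j <= m).
    assert (HI' : index_relation R s a (Some n) u b (Some m) I').
    { split; [intros i j [Hij Hj]; split; [apply (H1 _ _ Hij)|simpl; lia]|].
      split; [intros i j [Hij _]; auto|].
      split; [intros i j i' j' [? _] [? _]; eauto|].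
      split.
      - intros i Hi. simpl in Hi.
        destruct (Nat.eq_dec i n) as [->|Hne]; [exists m; split; auto|].
        destruct (H4 i ltac:(simpl; lia)) as [j Hj]. exists j. split; auto.
        apply (H3 _ _ _ _ Hj Hm). lia.
      - split.
        + intros j Hj. simpl in Hj.
          destruct (H5 j (in_index_le _ _ _ Hm' Hj)) as [i Hi]. exists i; split; auto.
        + split; [intros i j [? _] [? _]; eauto|].
          split; [intros i j [? _] [? _]; eauto|].
          intros i j [? _] [? _]; eauto. }
    destruct (nfree R s a _ u b _ I' HI') as [J (HJI & HJ & HN)].
    exists (Some m). split; [exact Hm'|]. split.
    { intros i Hi. apply Hfb. eapply in_index_le; [exact Hm'|exact Hi]. }
    exists J. split; [intros i j Hj; apply (HJI _ _ Hj)|]. split; [exact HJ|].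
    split; [|exact HN].
    intros n' Hn' j Hj. injection Hn' as <-.
    destruct (HJI _ _ Hj) as [Hj1 Hj2]. specialize (Hmin j Hj1). f_equal; lia.
  - destruct (nfree R s a _ u b _ I HI) as [J (HJI & HJ & HN)].
    exists len'. split.
    { destruct len'; simpl; auto. }
    split; [exact Hfb|].
    exists J. split; [exact HJI|]. split; [exact HJ|]. split; [|exact HN].
    intros n Hn; discriminate.
Qed.
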